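(* The subgroup of $G$ consisting of those elements that fix $Q\in\Lambda^2H_\Gamma$ is generated by the standard dominated $Q$-transvections and the $Q$-inversions.
   Context: $\Gamma$ is a finite simplicial graph with vertex set $X$, $|X|=2g$, $A_\Gamma$ its right-angled Artin group ($x,y$ commute iff adjacent), $H_\Gamma$ its abelianization, $L=X\cup X^{-1}$, and for $u\in L$, $\bar u\in X$ is its vertex. $\mathrm{lk}(v)$ = neighbours of $v$, $\mathrm{st}(v)=\mathrm{lk}(v)\cup\{v\}$; domination $v\ge w$ iff $\mathrm{lk}(w)\subset\mathrm{st}(v)$, extended to letters via their vertices. Fix a bijection $u\mapsto u^*$ of $L$ with $(u^* )^*=u^{-1}$ and letters $a_1,\dots,a_g\in L$ such that the vertices of $a_1,\dots,a_g,a_1^*,\dots,a_g^*$ are all of $X$; let $Q=\sum\{[a_i]\wedge[a_i^*]: \bar a_i^*\text{ adjacent to }\bar a_i\}\in\Lambda^2H_\Gamma$ (with $\mathrm{Aut}\,H_\Gamma$ acting diagonally), and assume $Q\ne0$. $\mathrm{supp}\,Q\subset X$ is the set of vertices appearing in $Q$. A letter $u\in L$ also denotes its image in $H_\Gamma$ (so $x^{-1}\mapsto -x$). For $a,b\in L$ with $a\ge b$, $\bar a\neq\bar b$, $E_{a,b}\in\mathrm{Aut}\,H_\Gamma$ sends $b\mapsto b+a$ and fixes the images of all $x\in X$ other than $\bar b$; $N_a$ sends $a\mapsto -a$ and fixes images of all $x\in X\setminus\{\bar a\}$. $G\le\mathrm{Aut}\,H_\Gamma$ is generated by $\{E_{a,b}: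 a\in X, b\in\mathrm{supp}\,Q, a\ge b, a\ne b\}\cup\{N_b:b\in\mathrm{supp}\,Q\}$. A standard dominated $Q$-transvection is an element of one of the forms: (1) $E_{a,a^*}$ where $\bar a\in\mathrm{supp}\,Q$ and $a\ge a^*$; (2) $E_{a,b}E_{b^*,a^*}^{-1}$ where $\bar a,\bar b\in\mathrm{supp}\,Q$, $\bar a\neq \bar b$, $\bar{a^*}\ne\bar b$, $a\ge b$ and $b^*\ge a^*$. The $Q$-inversion for $\bar a\in\mathrm{supp}\,Q$ is $N_aN_{a^*}$. *)

(* Defs.v *)
From HB Require Import structures.
From mathcomp Require Import all_boot all_order all_algebra.
Set Implicit Arguments. Unset Strict Implicit. Unset Printing Implicit Defensive.
Import Order.TTheory GRing.Theory Num.Theory.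
Local Open Scope ring_scope.

(* Conventions.
   - The vertex set X of Gamma is 'I_n (in the theorem n = 2 * g); the graph
     is a symmetric irreflexive relation adj : rel 'I_n.
   - H_Gamma = Z^X, elements are column vectors 'cV[int]_n; e_x = delta_mx x 0.
   - Aut H_Gamma acts by matrices 'M[int]_n (column j = image of e_j).
   - Lambda^2 H_Gamma is modelled by alternating integer matrices, with
     u /\ v := u v^T - v u^T and the diagonal action M.Q := M Q M^T.
   - A letter is a pair (x, b) : 'I_n * bool, b = true meaning x^{-1}. *)

Definition letter (n : nat) := ('I_n * bool)%type.

Definition bar n (u : letter n) : 'I_n := u.1.
Definition linv n (u : letter n) : letter n := (u.1, ~~ u.2).
Definition sgn n (u : letter n) : int := if u.2 then -1 else 1.

Definition lvec n (u : letter n) : 'cV[int]_n := sgn u *: delta_mx (bar u) 0.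

Definition wedge n (u v : 'cV[int]_n) : 'M[int]_n := u *m v^T - v *m u^T.

Definition act2 n (M Q : 'M[int]_n) : 'M[int]_n := M *m Q *m M^T.

Definition suppQ n (Q : 'M[int]_n) (x : 'I_n) : bool := [exists y, Q x y != 0].

(* domination v >= w  iff  lk(w) \subset st(v) *)
Definition dom n (adj : rel 'I_n) (v w : 'I_n) : bool :=
  [forall x, adj w x ==> (x == v) || adj v x].

(* E_{a,b}: b |-> b + a, fixes all other generators *)
Definition Emx n (a b : letter n) : 'M[int]_n :=
  1%:M + (sgn a * sgn b) *: delta_mx (bar a) (bar b).

Definition Nmx n (x : 'I_n) : 'M[int]_n := 1%:M - 2%:R *: delta_mx x x.

Inductive in_gen n (S : 'M[int]_n -> Prop) : 'M[int]_n -> Prop :=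
| gen_one : in_gen S 1%:M
| gen_base M : S M -> in_gen S M
| gen_mul M N : in_gen S M -> in_gen S N -> in_gen S (M *m N)
| gen_inv M : in_gen S M -> in_gen S (invmx M).

Definition Qform n g (adj : rel 'I_n) (a : 'I_g -> letter n)
    (star : letter n -> letter n) : 'M[int]_n :=
  \sum_(i < g | adj (bar (star (a i))) (bar (a i)))
     wedge (lvec (a i)) (lvec (star (a i))).

Definition G_gens n (adj : rel 'I_n) (Q : 'M[int]_n) (M : 'M[int]_n) : Prop :=
  (exists a b : 'I_n, [/\ suppQ Q b, dom adj a b, a != b &
                        M = Emx (a, false) (b, false)])
  \/ (exists b : 'I_n, suppQ Q b /\ M = Nmx b).

Definition std_transvection n (adj : rel 'I_n) (star : letter n -> letter n)
    (Q : 'M[int]_n) (M : 'M[int]_n) : Prop :=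
  (exists a : letter n,
     [/\ suppQ Q (bar a), dom adj (bar a) (bar (star a)),
         bar a != bar (star a) & M = Emx a (star a)])
  \/ (exists a b : letter n,
     [/\ suppQ Q (bar a), suppQ Q (bar b), bar a != bar b &
          bar (star a) != bar b] /\
     [/\ dom adj (bar a) (bar b), dom adj (bar (star b)) (bar (star a)),
          bar (star b) != bar (star a) &
          M = Emx a b *m invmx (Emx (star b) (star a))]).

Definition Q_inversion n (star : letter n -> letter n) (Q : 'M[int]_n)
    (M : 'M[int]_n) : Prop :=
  exists a : letter n, suppQ Q (bar a) /\ M = Nmx (bar a) *m Nmx (bar (star a)).

(* Main.v *)
Require Import Defs.
From HB Require Import structures.
From mathcomp Require Import all_boot all_order all_algebra.
From mathcomp Require Import ring lra zify.
Import Order.TTheory GRing.Theory Num.Theory.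
Local Open Scope ring_scope.
Set Implicit Arguments. Unset Strict Implicit. Unset Printing Implicit Defensive.

Section Main.
Variable g : nat.
Local Notation n := (2 * g)%N.
Variable adj : rel 'I_n.
Hypothesis adj_sym : symmetric adj.
Variable star : letter n -> letter n.
Hypothesis star_bij : bijective star.
Hypothesis star_inv : forall u, star (star u) = linv u.
Variable a : 'I_g -> letter n.
Hypothesis a_cover : forall x : 'I_n,
  exists i : 'I_g, bar (a i) = x \/ bar (star (a i)) = x.
Local Notation Q := (Qform adj a star).

Definition pp (x : 'I_n) : 'I_n := bar (star (x, false)).
Definition th (x : 'I_n) : int := sgn (star (x, false)).
Definition SS x := adj x (pp x).

Lemma linvK (u : letter n) : linv (linv u) = u.
Proof. by case: u => x b; rewrite /linv /= negbK. Qed.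

Lemma star_linv u : star (linv u) = linv (star u).
Proof. by rewrite -star_inv star_inv. Qed.

Lemma letter_cases (u : letter n) : u = (bar u, false) \/ u = linv (bar u, false).
Proof. by case: u => x [] /=; [right|left]. Qed.

Lemma bar_linv (u : letter n) : bar (linv u) = bar u. Proof. by []. Qed.
Lemma sgn_linv (u : letter n) : sgn (linv u) = - sgn u.
Proof. by case: u => x [] //=; rewrite /sgn /= opprK. Qed.

Lemma bar_star u : bar (star u) = pp (bar u).
Proof. by case: (letter_cases u) => ->; rewrite ?star_linv. Qed.

Lemma sgn_star u : sgn (star u) = sgn u * th (bar u).
Proof.
case: (letter_cases u) => ->; rewrite ?star_linv ?sgn_linv /th /sgn //=.
  by rewrite mul1r.
by rewrite mulN1r.
Qed.

Lemma sgn_sq (u : letter n) : sgn u * sgn u = 1.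
Proof. by rewrite /sgn; case: u.2; rewrite ?mulr1 ?mulrNN ?mulr1. Qed.

Lemma sgnpm (u : letter n) : sgn u = 1 \/ sgn u = -1.
Proof. by rewrite /sgn; case: u.2; [right|left]. Qed.

Lemma ppK x : pp (pp x) = x.
Proof.
by rewrite -[pp (pp x)]/(pp (bar (star (x,false)))) -bar_star star_inv.
Qed.

Lemma pp_inj : injective pp.
Proof. exact: can_inj ppK. Qed.

Lemma th_sq x : th x * th x = 1.
Proof. exact: sgn_sq. Qed.

Lemma th_pp x : th (pp x) = - th x.
Proof.
have := sgn_star (star (x, false)).
rewrite star_inv sgn_linv /= -/(th x) bar_star -/(pp x) /=.
have -> : sgn (x, false) = 1 by [].
move=> h. have : th x * th x * th (pp x) = - th x.
  by rewrite -mulrA -h mulrN mulr1.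
by rewrite th_sq mul1r.
Qed.

Lemma pp_neq x : pp x != x.
Proof.
apply/eqP; rewrite /pp.
case E: (star (x, false)) => [y b] /= h; subst y.
case: b E => E.
- have h : star (star (x, false)) = star (x,true) by rewrite E.
  rewrite star_inv /linv /= in h.
  have : star (x,false) = star (x,true) by rewrite E -h.
  by move/(bij_inj star_bij).
- have := star_inv (x,false). by rewrite !E /linv.
Qed.

Lemma SS_pp x : SS (pp x) = SS x.
Proof. by rewrite /SS ppK adj_sym. Qed.


Definition fcov (kb : 'I_g * bool) : 'I_n :=
  if kb.2 then pp (bar (a kb.1)) else bar (a kb.1).

Lemma fcov_inj : injective fcov.
Proof.
suff H : {in predT &, injective fcov} by move=> x y; apply: H.
apply/image_injP.
have -> : #|predT : {pred 'I_g * bool}| = n.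
  by rewrite card_prod card_ord card_bool mulnC.
rewrite -[X in _ == X](card_ord n); apply/eqP/eq_card => x; rewrite !inE.
have [i [h|h]] := a_cover x.
  by apply/imageP; exists (i, false).
by apply/imageP; exists (i, true) => //; rewrite /fcov /= -h bar_star.
Qed.

Lemma wedge_lvec (u v : letter n) i j :
  wedge (lvec u) (lvec v) i j =
  sgn u * sgn v * (((i == bar u) && (j == bar v))%:R - ((i == bar v) && (j == bar u))%:R).
Proof.
rewrite /wedge /lvec !mxE !big_ord1 !mxE.
rewrite (_ : (ord0 == 0 :> 'I_1) = true) // !andbT.
case: (i == bar u); case: (j == bar v); case: (i == bar v); case: (j == bar u);
  rewrite /=; ring.
Qed.

Lemma Qentry i j : Q i j = if SS i && (j == pp i) then th i else 0.
Proof.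
rewrite /Qform summxE big_mkcond /=.
have [[k b] hk] : exists kb, fcov kb = i.
  have [k [h|h]] := a_cover i.
    by exists (k, false).
  by exists (k, true); rewrite /fcov /= -h bar_star.
rewrite (bigD1 k) //= big1 ?addr0; last first.
  move=> k' nk; case: ifP => // _.
  rewrite wedge_lvec bar_star.
  have h1 : (i == bar (a k')) = false.
    apply/negbTE; apply/eqP => e; move: nk; rewrite -hk -[bar (a k')]/(fcov (k',false)) in e.
    by move/fcov_inj: e => [->]; rewrite eqxx.
  have h2 : (i == pp (bar (a k'))) = false.
    apply/negbTE; apply/eqP => e; move: nk; rewrite -hk -[pp (bar (a k'))]/(fcov (k',true)) in e.
    by move/fcov_inj: e => [->]; rewrite eqxx.
  by rewrite h1 h2 /= subrr mulr0.
rewrite wedge_lvec bar_star sgn_star mulrA sgn_sq mul1r.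
rewrite adj_sym -/(SS (bar (a k))).
move: hk; rewrite /fcov /=; set x := bar (a k); case: b => /= <-.
- rewrite SS_pp ppK th_pp eqxx (negbTE (pp_neq _)) /=.
  case: (SS x) => //=; case: (j == x) => /=; ring.
- rewrite eqxx [x == _]eq_sym (negbTE (pp_neq _)) /=.
  case: (SS x) => //=; case: (j == pp x) => /=; ring.
Qed.

Lemma suppQE x : suppQ Q x = SS x.
Proof.
apply/existsP/idP => [[y]|h]; first by rewrite Qentry; case: (SS x).
exists (pp x); rewrite Qentry h eqxx /=.
by apply/eqP => e; move: (th_sq x); rewrite e mul0r.
Qed.


Definition E (x y : 'I_n) (c : int) : 'M[int]_n := 1%:M + c *: delta_mx x y.

Lemma Emx_E (u v : letter n) : Emx u v = E (bar u) (bar v) (sgn u * sgn v).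
Proof. by []. Qed.

Lemma mul_delta_l (x y : 'I_n) (M : 'M[int]_n) i j :
  (delta_mx x y *m M) i j = (i == x)%:R * M y j.
Proof.
rewrite mxE (bigD1 y) //= big1 ?addr0; last first.
  by move=> k /negbTE nk; rewrite mxE nk andbF mul0r.
by rewrite mxE eqxx andbT.
Qed.

Lemma mulE x y c (M : 'M[int]_n) i j :
  (E x y c *m M) i j = M i j + c * (i == x)%:R * M y j.
Proof.
rewrite /E mulmxDl mul1mx -scalemxAl !mxE.
have := mul_delta_l x y M i j; rewrite mxE => ->; ring.
Qed.

Lemma mulET x y c (M : 'M[int]_n) i j :
  (M *m (E x y c)^T) i j = M i j + c * M i y * (j == x)%:R.
Proof.
rewrite -[M]trmxK -trmx_mul mxE mulE !mxE; congr (_ + _); ring.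
Qed.

Lemma E_entry x y c i j : E x y c i j = (i == j)%:R + c * ((i == x) && (j == y))%:R.
Proof. by rewrite /E !mxE. Qed.

Lemma EE x y c d : x != y -> E x y c *m E x y d = E x y (c + d).
Proof.
move=> nxy; apply/matrixP => i j; rewrite mulE !E_entry.
rewrite [y == x]eq_sym (negbTE nxy) /= mulr0 addr0 [y == j]eq_sym.
case: (i == x); case: (j == y); rewrite /= ?andbF; ring.
Qed.

Lemma E0 x y : E x y 0 = 1%:M.
Proof. by rewrite /E scale0r addr0. Qed.

Lemma E_unit x y c : x != y -> E x y c \in unitmx.
Proof.
move=> nxy; have h : E x y c *m E x y (-c) = 1%:M by rewrite EE // subrr E0.
by case: (mulmx1_unit h).
Qed.

Lemma invE x y c : x != y -> invmx (E x y c) = E x y (- c).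
Proof.
move=> nxy. have hu := E_unit c nxy.
rewrite -[RHS]mul1mx -(mulVmx hu) -mulmxA EE // subrr E0 mulmx1 //.
Qed.

Lemma Ecomm x y x' y' c d : y != x' -> y' != x ->
  E x y c *m E x' y' d = E x' y' d *m E x y c.
Proof.
move=> h1 h2; apply/matrixP => i j; rewrite !mulE !E_entry.
rewrite (negbTE h1) (negbTE h2) /= (eq_sym y j) (eq_sym y' j).
case: (i == x); case: (i == x'); rewrite /= ?mulr0 ?mulr1 ?addr0 ?andbF; ring.
Qed.

Lemma mulN x (M : 'M[int]_n) i j : (Nmx x *m M) i j = M i j - 2 * (i == x)%:R * M x j.
Proof.
rewrite /Nmx mulmxBl mul1mx -scalemxAl !mxE.
have := mul_delta_l x x M i j; rewrite mxE => ->; ring.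
Qed.

Lemma NN (x : 'I_n) : Nmx x *m Nmx x = 1%:M.
Proof.
apply/matrixP => i j; rewrite (mulN x (Nmx x)) /Nmx !mxE eqxx /=.
case: (i =P x) => [->|/eqP hi]; case: (j =P x) => [->|/eqP hj];
  rewrite ?eqxx ?(negbTE hi) ?(negbTE hj) ?(eq_sym x) ?(negbTE hi) ?(negbTE hj) /=; ring.
Qed.

Lemma N_unit (x : 'I_n) : Nmx x \in unitmx.
Proof. by case: (mulmx1_unit (NN x)). Qed.

Lemma invN (x : 'I_n) : invmx (Nmx x) = Nmx x.
Proof.
by rewrite -[RHS]mul1mx -(mulVmx (N_unit x)) -mulmxA NN mulmx1.
Qed.

Lemma act2M (A B C : 'M[int]_n) : act2 (A *m B) C = act2 A (act2 B C).
Proof. by rewrite /act2 trmx_mul !mulmxA. Qed.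

Lemma act21 (C : 'M[int]_n) : act2 1%:M C = C.
Proof. by rewrite /act2 trmx1 mul1mx mulmx1. Qed.

Lemma act2E x y c (A : 'M[int]_n) i j :
  act2 (E x y c) A i j = A i j + c * (i == x)%:R * A y j + c * A i y * (j == x)%:R
     + c * c * (i == x)%:R * (j == x)%:R * A y y.
Proof. rewrite /act2 mulET !mulE; ring. Qed.

Lemma mulNT x (M : 'M[int]_n) i j :
  (M *m (Nmx x)^T) i j = M i j - 2 * M i x * (j == x)%:R.
Proof.
rewrite -[M]trmxK -trmx_mul mxE mulN !mxE; congr (_ - _); ring.
Qed.

Lemma act2N x (A : 'M[int]_n) i j :
  act2 (Nmx x) A i j = (1 - 2 * (i == x)%:R) * (1 - 2 * (j == x)%:R) * A i j.
Proof.
rewrite /act2 mulNT !mulN.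
case: (i =P x) => [->|/eqP hi]; case: (j =P x) => [->|/eqP hj];
  rewrite ?eqxx ?(negbTE hi) ?(negbTE hj) /=; ring.
Qed.

Lemma act2_inv (M C : 'M[int]_n) : M \in unitmx -> act2 M C = C -> act2 (invmx M) C = C.
Proof.
by move=> hu h; rewrite -{1}h -act2M mulVmx // act21.
Qed.


Lemma dom_trans x y z : x != z -> dom adj x y -> dom adj y z -> dom adj x z.
Proof.
move=> nxz /forallP hxy /forallP hyz; apply/forallP => w; apply/implyP => hzw.
have := implyP (hyz w) hzw; case/orP => [/eqP ewy|hyw]; last exact: implyP (hxy w) hyw.
subst w.
have := implyP (hxy z); rewrite adj_sym hzw => /(_ isT); case/orP => [/eqP ezx|hxz].
  by rewrite ezx eqxx in nxz.
have := implyP (hyz x); rewrite adj_sym hxz => /(_ isT); case/orP => [/eqP ->|hyx].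
  by rewrite eqxx.
by rewrite adj_sym hyx orbT.
Qed.

Definition Dp (M : 'M[int]_n) :=
  (forall x y, x != y -> M x y != 0 -> dom adj x y && SS y) /\
  (forall y, ~~ SS y -> M y y = 1).

Definition GI (M : 'M[int]_n) := [/\ M \in unitmx, Dp M & Dp (invmx M)].

Lemma sum_neq0 (I : finType) (F : I -> int) : \sum_i F i != 0 -> exists i, F i != 0.
Proof.
move=> h; case: (pickP (fun i => F i != 0)) => [i hi|h0]; first by exists i.
by move: h; rewrite big1 ?eqxx // => i _; apply/eqP; move: (h0 i) => /negbFE.
Qed.

Lemma Dmul M N : Dp M -> Dp N -> Dp (M *m N).
Proof.
move=> [hM1 hM2] [hN1 hN2]; split.
  move=> x y nxy; rewrite mxE => /sum_neq0 [k]; rewrite mulf_eq0 negb_or => /andP [hxk hky].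
  case: (x =P k) => [ekx|/eqP nxk].
    by subst k; apply: hN1.
  case: (k =P y) => [eky|/eqP nky].
    by subst k; apply: hM1.
  case/andP: (hM1 _ _ nxk hxk) => d1 _; case/andP: (hN1 _ _ nky hky) => d2 ->.
  by rewrite andbT; apply: dom_trans d1 d2.
move=> y hy; rewrite mxE (bigD1 y) //= big1 ?addr0 ?hM2 ?hN2 ?mulr1 //.
move=> k nky; case: (N k y =P 0) => [->|/eqP hk]; first by rewrite mulr0.
by case/andP: (hN1 _ _ nky hk) => _ hs; rewrite hs in hy.
Qed.

Lemma Dp1 : Dp 1%:M.
Proof.
split=> [x y nxy|y _]; first by rewrite mxE (negbTE nxy).
by rewrite mxE eqxx.
Qed.

Lemma GI1 : GI 1%:M.
Proof. by split; rewrite ?unitmx1 ?invmx1 //; apply: Dp1. Qed.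

Lemma inv_uniq (X Y : 'M[int]_n) : X \in unitmx -> Y *m X = 1%:M -> invmx X = Y.
Proof.
by move=> hu h; rewrite -[invmx X]mul1mx -h -mulmxA mulmxV // mulmx1.
Qed.

Lemma invmxM' (A B : 'M[int]_n) : A \in unitmx -> B \in unitmx ->
  invmx (A *m B) = invmx B *m invmx A.
Proof.
move=> ha hb; apply: inv_uniq; first by rewrite unitmx_mul ha.
by rewrite mulmxA -[invmx B *m invmx A *m A]mulmxA mulVmx // mulmx1 mulVmx.
Qed.

Lemma GImul M N : GI M -> GI N -> GI (M *m N).
Proof.
move=> [u1 d1 e1] [u2 d2 e2]; split; first by rewrite unitmx_mul u1.
  exact: Dmul.
by rewrite invmxM' //; apply: Dmul.
Qed.

Lemma GIinv M : GI M -> GI (invmx M).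
Proof. by move=> [u d e]; split; rewrite ?unitmx_inv ?invmxK. Qed.

Lemma DpE x y c : x != y -> dom adj x y -> SS y -> Dp (E x y c).
Proof.
move=> nxy hd hs; split=> [i j nij|j hj]; rewrite E_entry.
  rewrite (negbTE nij) add0r; case: (i =P x) => [->|_]; case: (j =P y) => [->|_] /=;
    by rewrite ?mulr0 ?eqxx // => _; rewrite hd hs.
rewrite eqxx /=; case: (j =P x) => [ejx|] /=; last by rewrite mulr0 addr0.
by case: (j =P y) => [ejy|]; [rewrite -ejy (negbTE hj) in hs| rewrite mulr0 addr0].
Qed.

Lemma DpN x : SS x -> Dp (Nmx x).
Proof.
move=> hs; split=> [i j nij|j hj]; rewrite /Nmx !mxE.
  rewrite (negbTE nij); case: (i =P x) => [ex|_]; last by rewrite /=.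
  by subst i; rewrite /= [j == x]eq_sym (negbTE nij) /=.
have nj : j != x by apply: contraNneq hj => ->.
by rewrite eqxx (negbTE nj) /= mulr0 subr0.
Qed.

Lemma GI_E x y c : x != y -> dom adj x y -> SS y -> GI (E x y c).
Proof.
move=> nxy hd hs; split; [exact: E_unit | exact: DpE | rewrite invE //; exact: DpE].
Qed.

Lemma GI_N x : SS x -> GI (Nmx x).
Proof. by move=> hs; split; rewrite ?N_unit ?invN //; apply: DpN. Qed.

Lemma GI_gen M : in_gen (G_gens adj Q) M -> GI M.
Proof.
elim=> [|{}M hM|M1 M2 _ h1 _ h2|{}M _ h]; [exact: GI1| |exact: GImul|exact: GIinv].
case: hM => [[x [y [hs hd nxy ->]]]|[x [hs ->]]].
  by rewrite Emx_E; apply: GI_E => //; rewrite -suppQE.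
by apply: GI_N; rewrite -suppQE.
Qed.


Definition Lg (M : 'M[int]_n) := in_gen (G_gens adj Q) M /\ act2 M Q = Q.
Definition Rg (M : 'M[int]_n) :=
  in_gen (fun N => std_transvection adj star Q N \/ Q_inversion star Q N) M.

Lemma Lg1 : Lg 1%:M.
Proof. by split; [constructor | rewrite act21]. Qed.

Lemma LHSmul M N : Lg M -> Lg N -> Lg (M *m N).
Proof.
by move=> [g1 f1] [g2 f2]; split; [apply: gen_mul | rewrite act2M f2 f1].
Qed.

Lemma LHSinv M : Lg M -> Lg (invmx M).
Proof.
move=> [g1 f1]; split; first exact: gen_inv.
by apply: act2_inv => //; case: (GI_gen g1).
Qed.

Lemma LHS_unit M : Lg M -> M \in unitmx.
Proof. by case=> /GI_gen []. Qed.

Definition fixedcol (M : 'M[int]_n) z := forall i, M i z = (i == z)%:R.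

Lemma fixedcol_inv M z : M \in unitmx -> fixedcol M z -> fixedcol (invmx M) z.
Proof.
move=> hu h i; have := congr1 (fun A : 'M[int]_n => A i z) (mulVmx hu).
rewrite mxE (bigD1 z) //= big1 ?addr0; last by move=> k nk; rewrite h (negbTE nk) mulr0.
by rewrite h eqxx mulr1 mxE.
Qed.

Lemma eq_pp z k : (z == pp k) = (pp z == k).
Proof. by apply/eqP/eqP => [->|<-]; rewrite ppK. Qed.

Lemma sum_pick (F : 'I_n -> int) y :
  \sum_k (if k == y then F k else 0) = F y.
Proof.
rewrite (bigD1 y) //= eqxx big1 ?addr0 // => k /negbTE ->; done.
Qed.

Lemma relQ M x z : Lg M ->
  (if SS z then M x (pp z) * th (pp z) else 0) =
  (if SS x then th x * invmx M z (pp x) else 0).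
Proof.
move=> hL; have hu := LHS_unit hL; case: hL => _ hf.
have h : M *m Q = Q *m (invmx M)^T.
  rewrite -{2}hf /act2 -!mulmxA -trmx_mul mulVmx // trmx1 mulmx1 //.
have e1 : \sum_k M x k * Q k z = if SS (pp z) then M x (pp z) * th (pp z) else 0.
  rewrite -(sum_pick (fun k => if SS k then M x k * th k else 0)); apply: eq_bigr => k _.
  rewrite Qentry eq_pp eq_sym; case: (k == pp z); case: (SS k); rewrite /= ?andbF ?mulr0 //.
have e2 : \sum_k Q x k * invmx M z k = if SS x then th x * invmx M z (pp x) else 0.
  rewrite -(sum_pick (fun k => if SS x then th x * invmx M z k else 0)); apply: eq_bigr => k _.
  rewrite Qentry; case: (k == pp x); case: (SS x); rewrite /= ?mul0r //.
have := congr1 (fun A : 'M[int]_n => A x z) h; rewrite !mxE.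
under [in X in _ = X]eq_bigr => k0 _ do rewrite mxE.
by rewrite e1 e2 SS_pp.
Qed.



Lemma th_neq0 x : th x != 0.
Proof. by apply/eqP => e; move: (th_sq x); rewrite e mul0r. Qed.

Lemma F_nonS M y : Lg M -> ~~ SS y -> fixedcol M y.
Proof.
case=> /GI_gen [_ [d1 d2] _] _ hy i.
case: (i =P y) => [->|/eqP niy]; first by rewrite d2 // eqxx.
apply/eqP; apply: contraNT hy => h; by case/andP: (d1 _ _ niy h).
Qed.

Lemma F_shape M x y : Lg M -> x != y -> M x y != 0 ->
  [/\ SS x, SS y, dom adj x y & dom adj (pp y) (pp x)].
Proof.
move=> hL nxy hxy; have [_ [d1 _] [e1 _]] := GI_gen hL.1.
case/andP: (d1 _ _ nxy hxy) => hd hs.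
have := relQ x (pp y) hL; rewrite SS_pp hs ppK.
case: ifP => hsx; last first.
  by move/eqP; rewrite mulf_eq0 (negbTE hxy) (negbTE (th_neq0 _)).
move=> e; have hn : invmx M (pp y) (pp x) != 0.
  apply: contraNneq (mulf_neq0 hxy (th_neq0 y)) => h0; by rewrite e h0 mulr0.
have npp : pp y != pp x by rewrite (inj_eq pp_inj) eq_sym.
by case/andP: (e1 _ _ npp hn) => hd2 _; split.
Qed.

Lemma F_row M y j : Lg M -> fixedcol M (pp y) -> j != y -> M y j = 0.
Proof.
move=> hL hf nj.
case hs: (SS j); last by rewrite (F_nonS hL (negbT hs)) eq_sym (negbTE nj).
have := relQ y (pp j) hL; rewrite SS_pp hs ppK.
rewrite (fixedcol_inv (LHS_unit hL) hf) (inj_eq pp_inj) (negbTE nj) mulr0 if_same.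
by move/eqP; rewrite mulf_eq0 (negbTE (th_neq0 _)) orbF => /eqP.
Qed.

Lemma F_diag M v : Lg M -> SS v -> fixedcol M v -> M (pp v) (pp v) = 1.
Proof.
move=> hL hs hf; have := relQ (pp v) v hL; rewrite hs SS_pp hs ppK.
rewrite (fixedcol_inv (LHS_unit hL) hf) eqxx mulr1 mulrC => e.
by apply: (mulIf (th_neq0 (pp v))); rewrite mulrC e mul1r.
Qed.

Lemma F_single M v u : Lg M -> (forall k, k != u -> M k v = 0) ->
  M u v = 1 \/ M u v = -1.
Proof.
move=> hL hk; have := congr1 (fun A : 'M[int]_n => A v v) (mulVmx (LHS_unit hL)).
rewrite mxE (bigD1 u) //= big1 ?addr0; last by move=> k nk; rewrite hk // mulr0.
rewrite mxE eqxx /= mulrC => h.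
have := congr1 absz h; rewrite abszM => /eqP; rewrite muln_eq1 => /andP [/eqP hm _].
lia.
Qed.

Lemma F_colnz M v : Lg M -> exists u, M u v != 0.
Proof.
move=> hL; have := congr1 (fun A : 'M[int]_n => A v v) (mulVmx (LHS_unit hL)).
rewrite !mxE eqxx /= => h.
have : \sum_j invmx M v j * M j v != 0 by rewrite h oner_eq0.
by case/sum_neq0 => u; rewrite mulf_eq0 negb_or => /andP [_ hu]; exists u.
Qed.

Lemma pow_gen (S : 'M[int]_n -> Prop) (F : int -> 'M[int]_n) :
  (forall c d, F c *m F d = F (c + d)) -> F 0 = 1%:M -> in_gen S (F 1) ->
  forall c, in_gen S (F c).
Proof.
move=> hF h0 h1.
have hm : F (-1) *m F 1 = 1%:M by rewrite hF addNr h0.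
have hp : F 1 *m F (-1) = 1%:M by rewrite hF subrr h0.
have hu : F 1 \in unitmx by case: (mulmx1_unit hp).
have hi : in_gen S (F (-1)) by rewrite -(inv_uniq hu hm); apply: gen_inv.
have hn : forall m : nat, in_gen S (F m%:Z) /\ in_gen S (F (- m%:Z)).
  elim=> [|m [ih1 ih2]]; first by rewrite oppr0 h0; split; constructor.
  have -> : (m.+1)%:Z = m%:Z + 1 by rewrite -[m.+1]addn1 PoszD.
  split; first by rewrite -hF; apply: gen_mul.
  by rewrite opprD -hF; apply: gen_mul.
by case=> m; [case: (hn m) | rewrite NegzE; case: (hn m.+1)].
Qed.

Definition T2 x y c := E x y c *m E (pp y) (pp x) (- (c * th x * th y)).

Lemma T2M x y c d : x != y -> T2 x y c *m T2 x y d = T2 x y (c + d).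
Proof.
move=> nxy; rewrite /T2 mulmxA -[E x y c *m _ *m _]mulmxA.
rewrite -Ecomm ?pp_neq // ?[pp x != x]pp_neq; last by rewrite eq_sym pp_neq.
rewrite mulmxA EE // -mulmxA EE; last by rewrite (inj_eq pp_inj) eq_sym.
by congr (_ *m E _ _ _); ring.
Qed.

Lemma T20 x y : T2 x y 0 = 1%:M.
Proof. by rewrite /T2 !mul0r oppr0 !E0 mulmx1. Qed.


Lemma actQ_E1 x c : act2 (E x (pp x) c) Q = Q.
Proof.
apply/matrixP => i j; rewrite act2E !Qentry SS_pp ppK th_pp (inj_eq pp_inj).
rewrite (negbTE (pp_neq x)) /= andbF mulr0 addr0.
case: (i =P x) => [->|/eqP ni]; case: (j =P x) => [->|/eqP nj];
  rewrite ?eqxx ?(negbTE ni) ?(negbTE nj) ?[x == i]eq_sym ?(negbTE ni) /=;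
  case: (SS x); rewrite /= ?andbF; ring.
Qed.


Ltac simpl_eqs := repeat match goal with
 | H : is_true (?a != ?b) |- context [?a == ?b] => rewrite (negbTE H)
 | H : is_true (?a != ?b) |- context [?b == ?a] => rewrite [b == a]eq_sym (negbTE H)
 | |- context [?a == ?a] => rewrite eqxx
 | |- context [pp (pp ?a)] => rewrite ppK
 | |- context [pp ?a == ?a] => rewrite (negbTE (pp_neq a))
 | |- context [?a == pp ?a] => rewrite [a == pp a]eq_sym (negbTE (pp_neq a))
 | |- context [pp ?a == pp ?b] => rewrite (inj_eq pp_inj)
 end.

Lemma actQ_E2a x y c : SS x -> SS y -> x != y -> pp x != y ->
  act2 (E (pp y) (pp x) (- (c * th x * th y))) Q = act2 (E x y (- c)) Q.
Proof.
move=> sx sy nxy npxy.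
have nxpy : x != pp y by rewrite eq_pp.
apply/matrixP => i j; rewrite !act2E !Qentry SS_pp ppK th_pp (inj_eq pp_inj) [y == pp i]eq_pp.
rewrite (negbTE (pp_neq x)) [y == pp y]eq_sym (negbTE (pp_neq y)) /= !andbF !mulr0 !addr0.
rewrite sx sy /=.
have [tx|tx] := sgnpm (star (x, false)); have [ty|ty] := sgnpm (star (y, false));
rewrite -/(th x) in tx; rewrite -/(th y) in ty;
case: (i =P x) => [->|/eqP ni]; try (case: (i =P pp y) => [->|/eqP ni2]);
  case: (j =P x) => [->|/eqP nj]; try (case: (j =P pp y) => [->|/eqP nj2]);
  simpl_eqs; rewrite /= ?th_pp ?SS_pp ?sx ?sy ?tx ?ty ?andbF ?andbT /=; ring.
Qed.


Lemma actQ_T2 x y c : SS x -> SS y -> x != y -> pp x != y -> act2 (T2 x y c) Q = Q.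
Proof.
move=> sx sy nxy npxy; by rewrite /T2 act2M actQ_E2a // -act2M EE // subrr E0 act21.
Qed.

Lemma actQ_N x : act2 (Nmx x *m Nmx (pp x)) Q = Q.
Proof.
apply/matrixP => i j; rewrite act2M act2N act2N Qentry.
case: (SS i) => /=; last by ring.
case: (j =P pp i) => [->|_]; last by ring.
case: (i =P x) => [->|/eqP ni].
  by simpl_eqs; rewrite /=; ring.
case: (i =P pp x) => [->|/eqP ni2].
  by simpl_eqs; rewrite /=; ring.
have h1 : (pp i == x) = false by rewrite -eq_pp; apply/negbTE.
have h2 : (pp i == pp x) = false by rewrite (inj_eq pp_inj); apply/negbTE.
rewrite h1 h2 /=; ring.
Qed.

Lemma genG_E x y c : SS y -> dom adj x y -> x != y -> in_gen (G_gens adj Q) (E x y c).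
Proof.
move=> hs hd nxy.
apply: (pow_gen (F := E x y)); [move=> c1 d; exact: EE | exact: E0 |].
apply: gen_base; left; exists x, y; split; rewrite ?suppQE //.
Qed.


Lemma Lg_E1 x c : SS x -> dom adj x (pp x) -> Lg (E x (pp x) c).
Proof.
move=> hs hd; split; last exact: actQ_E1.
by apply: genG_E; rewrite ?SS_pp // eq_sym pp_neq.
Qed.

Lemma Lg_T2 x y c : SS x -> SS y -> x != y -> pp x != y ->
  dom adj x y -> dom adj (pp y) (pp x) -> Lg (T2 x y c).
Proof.
move=> sx sy nxy npxy d1 d2; split; last exact: actQ_T2.
apply: gen_mul; apply: genG_E => //; first by rewrite SS_pp.
by rewrite (inj_eq pp_inj) eq_sym.
Qed.

Lemma Lg_N x : SS x -> Lg (Nmx x *m Nmx (pp x)).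
Proof.
move=> hs; split; last exact: actQ_N.
by apply: gen_mul; apply: gen_base; right; [exists x | exists (pp x)]; rewrite suppQE ?SS_pp.
Qed.

Lemma Rg_E1 x c : SS x -> dom adj x (pp x) -> Rg (E x (pp x) c).
Proof.
move=> hs hd.
have -> : c = (c * th x) * th x by rewrite -mulrA th_sq mulr1.
apply: (pow_gen (F := fun c => E x (pp x) (c * th x))).
- by move=> c1 d; rewrite EE ?mulrDl // eq_sym pp_neq.
- by rewrite mul0r E0.
apply: gen_base; left; left; exists (x, false); split; rewrite ?suppQE //.
by rewrite eq_sym pp_neq.
Qed.

Lemma Rg_T2 x y c : SS x -> SS y -> x != y -> pp x != y ->
  dom adj x y -> dom adj (pp y) (pp x) -> Rg (T2 x y c).
Proof.
move=> sx sy nxy npxy d1 d2.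
apply: (pow_gen (F := T2 x y)); [move=> c1 d; exact: T2M| exact: T20|].
apply: gen_base; left; right; exists (x, false), (y, false).
split; first by split; rewrite ?suppQE.
split=> //; first by rewrite /= (inj_eq pp_inj) eq_sym.
rewrite /T2 Emx_E invE; last by rewrite /= (inj_eq pp_inj) eq_sym.
rewrite /=; congr (_ *m E _ _ _); rewrite /th; ring.
Qed.

Lemma Rg_N x : SS x -> Rg (Nmx x *m Nmx (pp x)).
Proof.
move=> hs; apply: gen_base; right; exists (x, false); split; rewrite ?suppQE //.
Qed.

Lemma Rg_Lg M : Rg M -> Lg M.
Proof.
elim=> [|{}M hM|M1 M2 _ h1 _ h2|{}M _ h]; [exact: Lg1| |exact: LHSmul|exact: LHSinv].
case: hM => [[[u [hs hd nu ->]]|[u [v [[hs1 hs2 nuv nsv] [hd1 hd2 nsvu ->]]]]]|[u [hs ->]]].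
- rewrite Emx_E !bar_star; apply: Lg_E1; rewrite -?suppQE //.
  by rewrite -bar_star.
- rewrite !Emx_E invE // !bar_star.
  have -> : - (sgn (star v) * sgn (star u)) = - ((sgn u * sgn v) * th (bar u) * th (bar v)).
    rewrite !sgn_star; ring.
  rewrite !bar_star in nsv hd2 nsvu.
  apply: Lg_T2; rewrite -?suppQE //.
- rewrite bar_star; apply: Lg_N; rewrite -suppQE //.
Qed.


Definition R x y := (x == y) || (dom adj x y && dom adj (pp y) (pp x)).

Lemma R_refl x : R x x.
Proof. by rewrite /R eqxx. Qed.

Lemma R_dom x y : x != y -> R x y -> dom adj x y && dom adj (pp y) (pp x).
Proof. by rewrite /R => /negbTE ->. Qed.

Lemma R_trans x y z : R x y -> R y z -> R x z.
Proof.
rewrite /R; case: (x =P y) => [->|/eqP nxy] //= hxy.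
case: (y =P z) => [<-|/eqP nyz] //= hyz; first by rewrite hxy orbT.
case: (x =P z) => [//|/eqP nxz] /=.
case/andP: hxy => a1 a2; case/andP: hyz => b1 b2.
rewrite (dom_trans nxz a1 b1) /=; apply: dom_trans b2 a2.
by rewrite (inj_eq pp_inj) eq_sym.
Qed.

Lemma fixedcol_E M x y c z : fixedcol M z -> y != z -> fixedcol (E x y c *m M) z.
Proof. by move=> h nyz i; rewrite mulE h (h y) (negbTE nyz) mulr0 addr0. Qed.

Lemma fixedcol_N M x z : fixedcol M z -> x != z -> fixedcol (Nmx x *m M) z.
Proof. by move=> h nxz i; rewrite mulN h (h x) (negbTE nxz) mulr0 subr0. Qed.

Lemma Rstep T M : Rg T -> Rg (T *m M) -> Rg M.
Proof.
move=> hT hTM; have hu := LHS_unit (Rg_Lg hT).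
by rewrite -[M]mul1mx -(mulVmx hu) -mulmxA; apply: gen_mul => //; apply: gen_inv.
Qed.

Section Reduce.
Variable PF0 : pred 'I_n.
Hypothesis PF0_pp : forall z, PF0 (pp z) = PF0 z.
Variable v : 'I_n.
Hypothesis Sv : SS v.
Hypothesis nPv : ~~ PF0 v.
Hypothesis vmax : forall x, SS x -> ~~ PF0 x -> R x v -> R v x.

Definition Bi M := Lg M /\ (forall z, PF0 z -> fixedcol M z).
Definition C x := [&& SS x, ~~ PF0 x, R x v & R v x].
Definition Inv1 M := Bi M /\ (forall x, M x v != 0 -> C x).

Lemma Cv : C v.
Proof. by rewrite /C Sv nPv R_refl. Qed.

Lemma Bi_step T M : Lg T -> Bi M ->
  (forall z, PF0 z -> fixedcol M z -> fixedcol (T *m M) z) -> Bi (T *m M).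
Proof. by move=> hT [hL hf] h; split; [apply: LHSmul | move=> z hz; apply: h; last apply: hf]. Qed.

Lemma stepA M s t c : Inv1 M -> C s -> C t -> s != t ->
  (t == pp s) || (M (pp s) v == 0) ->
  (forall M', Inv1 M' -> (forall i, M' i v = M i v + c * (i == s)%:R * M t v) -> Rg M') ->
  Rg M.
Proof.
move=> [hB hsupp] Cs Ct nst hcond cont.
have Cs' := Cs; have Ct' := Ct.
case/and4P: Cs => Ss nPs Rsv Rvs; case/and4P: Ct => St nPt Rtv Rvt.
have Rst : R s t by apply: R_trans Rsv Rvt.
have nPps : ~~ PF0 (pp s) by rewrite PF0_pp.
have supp_new : forall M', (forall i, M' i v = M i v + c * (i == s)%:R * M t v) ->
    forall x, M' x v != 0 -> C x.
  move=> M' hM' x; rewrite hM'; case: (x =P s) => [->|_] //.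
  by rewrite mulr0 mul0r addr0; apply: hsupp.
case: (t =P pp s) => [et|/eqP nt].
  subst t.
  have nsp : s != pp s by rewrite eq_sym pp_neq.
  have hd := proj1 (andP (R_dom nsp Rst)).
  have hT := Rg_E1 c Ss hd.
  apply: (Rstep hT); apply: cont.
    split; last by apply: supp_new => i; rewrite mulE.
    apply: Bi_step (Rg_Lg hT) hB _ => z hz hf; apply: fixedcol_E => //.
    by apply: contraNneq nPps => ->.
  by move=> i; rewrite mulE.
have h0 : M (pp s) v = 0 by move: hcond; rewrite (negbTE nt) /= => /eqP.
have npst : pp s != t by rewrite eq_sym.
case/andP: (R_dom nst Rst) => d1 d2.
have hT := Rg_T2 c Ss St nst npst d1 d2.
have col : forall i, (T2 s t c *m M) i v = M i v + c * (i == s)%:R * M t v.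
  by move=> i; rewrite /T2 -mulmxA !mulE h0 !mulr0 !addr0.
apply: (Rstep hT); apply: cont => //.
split; last exact: supp_new.
apply: Bi_step (Rg_Lg hT) hB _ => z hz hf; rewrite /T2 -mulmxA.
apply: fixedcol_E; first apply: fixedcol_E => //.
  by apply: contraNneq nPps => ->.
by apply: contraNneq nPt => ->.
Qed.

Definition mu (M : 'M[int]_n) := (\sum_x absz (M x v))%N.

Lemma mu_lt (M M' : 'M[int]_n) s : (forall i, i != s -> M' i v = M i v) ->
  (absz (M' s v) < absz (M s v))%N -> (mu M' < mu M)%N.
Proof.
move=> h hs; rewrite /mu (bigD1 s) //= [in X in (_ < X)%N](bigD1 s) //=.
rewrite (eq_bigr (fun i => absz (M i v))) ?ltn_add2r // => i /h ->; done.
Qed.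

Lemma int_red (x y : int) : y != 0 -> (absz y <= absz x)%N ->
  exists c : int, (absz (x + c * y)%R < absz x)%N.
Proof.
move=> h1 h2. case: (lerP 0 (x*y)) => h3.
 by exists (-1); nia.
by exists 1; nia.
Qed.

Lemma phase1 :
  (forall M, Inv1 M -> (exists u, forall k, k != u -> M k v = 0) -> Rg M) ->
  forall M, Inv1 M -> Rg M.
Proof.
move=> cont.
suff H : forall m M, (mu M < m)%N -> Inv1 M -> Rg M by move=> M; apply: (H (mu M).+1).
elim=> // m IH M hm hI.
case: (pickP (fun st : 'I_n * 'I_n => (st.1 != st.2) && (M st.1 v != 0) && (M st.2 v != 0)))
  => [[s0 t0] /= /andP[/andP[nst0 hs0] ht0] | hno]; last first.
  have [u hu] := F_colnz v hI.1.1.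
  apply: cont => //; exists u => k nk; apply/eqP.
  by move: (hno (k,u)) => /=; rewrite nk hu andbT /= => /negbFE.
have key : exists s t, [/\ s != t, M s v != 0, M t v != 0,
    (t == pp s) || (M (pp s) v == 0) & (absz (M t v) <= absz (M s v))%N].
  case: (pickP (fun x => (M x v != 0) && (M (pp x) v != 0))) => [x /andP[h1 h2]| hnp].
    case: (leqP (absz (M (pp x) v)) (absz (M x v))) => hle.
      by exists x, (pp x); split; rewrite ?eqxx // eq_sym pp_neq.
    exists (pp x), x; split; rewrite ?ppK ?eqxx ?pp_neq //; exact: ltnW.
  have hz : forall x, M x v != 0 -> M (pp x) v == 0.
    by move=> x hx; move: (hnp x); rewrite hx /= => /negbFE.
  case: (leqP (absz (M t0 v)) (absz (M s0 v))) => hle.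
    by exists s0, t0; split; rewrite ?hz ?orbT.
  exists t0, s0; split; rewrite ?hz ?orbT // 1?eq_sym //; exact: ltnW.
case: key => s [t [nst hs ht hcond hle]].
have [c hc] := int_red ht hle.
apply: (stepA (c := c) hI (hI.2 _ hs) (hI.2 _ ht) nst hcond) => M' hI' hcol.
apply: (IH M') => //.
have : (mu M' < mu M)%N.
  apply: (mu_lt (s := s)).
    by move=> i nis; rewrite hcol (negbTE nis) mulr0 mul0r addr0.
  by rewrite hcol eqxx mulr1.
by move=> h; apply: leq_trans h _.
Qed.

Lemma phase2a :
  (forall M, Bi M -> fixedcol M v -> Rg M) ->
  forall M, Inv1 M -> (forall k, k != v -> M k v = 0) -> Rg M.
Proof.
move=> cont M [hB hs] hk.
have fc : M v v = 1 -> fixedcol M v.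
  by move=> h1 i; case: (i =P v) => [->|/eqP ni]; rewrite ?h1 ?eqxx // hk // (negbTE ni).
case: (F_single hB.1 hk) => [h1|hm1]; first by apply: cont => //; apply: fc.
have hT := Rg_N Sv.
apply: (Rstep hT); apply: cont.
  apply: Bi_step (Rg_Lg hT) hB _ => z hz hf; rewrite -mulmxA.
  have nz : v != z by apply: contraNneq nPv => ->.
  apply: fixedcol_N => //; apply: fixedcol_N => //.
  by apply: contraNneq nPv => ez; rewrite -PF0_pp ez.
move=> i; rewrite -mulmxA !mulN.
have hpv : M (pp v) v = 0 by rewrite hk // pp_neq.
rewrite hpv !mulr0 !subr0 hm1.
case: (i =P v) => [->|/eqP ni]; first by rewrite hm1 /=; ring.
by rewrite hk //= ; ring.
Qed.

Lemma phase2 :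
  (forall M, Bi M -> fixedcol M v -> Rg M) ->
  forall M, Inv1 M -> (exists u, forall k, k != u -> M k v = 0) -> Rg M.
Proof.
move=> cont M hI [u hu].
case: (u =P v) => [euv|/eqP nuv]; first by subst u; apply: phase2a.
case: (M u v =P 0) => [h0|/eqP hnz].
  by apply: phase2a => // k nk; case: (k =P u) => [->|/eqP]; [exact: h0 | exact: hu].
have Cu := hI.2 _ hnz.
have hcond : (u == pp v) || (M (pp v) v == 0).
  by case: (u =P pp v) => [//|/eqP nu] /=; rewrite hu // eq_sym.
have nvu : v != u by rewrite eq_sym.
apply: (stepA (c := 1) hI Cv Cu nvu hcond) => M1 hI1 hc1.
have hcond2 : (v == pp u) || (M1 (pp u) v == 0).
  case: (v =P pp u) => [//|/eqP nv] /=.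
  by rewrite hc1 (hu (pp u)) ?pp_neq // [pp u == v]eq_sym (negbTE nv) mulr0 mul0r addr0.
apply: (stepA (c := -1) hI1 Cu Cv nuv hcond2) => M2 hI2 hc2.
apply: phase2a => // k nk.
rewrite hc2 !hc1 eqxx mulr1 (hu v) ?(eq_sym v) // add0r.
case: (k =P u) => [->|/eqP nku].
  by rewrite (negbTE nuv) /=; ring.
by rewrite (negbTE nk) hu //=; ring.
Qed.

Definition nu (M : 'M[int]_n) :=
  #|[set x | (x != v) && (x != pp v) && (M x (pp v) != 0)]|.

Lemma phase3 :
  (forall M, Bi M -> fixedcol M v -> fixedcol M (pp v) -> Rg M) ->
  forall M, Bi M -> fixedcol M v -> Rg M.
Proof.
move=> cont.
suff H : forall m M, (nu M < m)%N -> Bi M -> fixedcol M v -> Rg M.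
  by move=> M; apply: (H (nu M).+1).
elim=> // m IH M hm hB hfv.
have hL := hB.1.
have nvpv : v != pp v by rewrite eq_sym pp_neq.
have npvv : pp v != v by rewrite pp_neq.
have nPpv : ~~ PF0 (pp v) by rewrite PF0_pp.
have hdiag := F_diag hL Sv hfv.
case: (pickP (fun x => (x != v) && (x != pp v) && (M x (pp v) != 0)))
  => [x /andP[/andP[nxv nxpv] hx] | hno]; last first.
  have hrest : forall i, i != v -> i != pp v -> M i (pp v) = 0.
    by move=> i h1 h2; apply/eqP; move: (hno i); rewrite h1 h2 /= => /negbFE.
  case: (M v (pp v) =P 0) => [h0|/eqP hnz].
    apply: cont => // i.
    case: (i =P v) => [->|/eqP niv]; first by rewrite h0 (negbTE nvpv).
    case: (i =P pp v) => [->|/eqP nipv]; first by rewrite hdiag /=.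
    by rewrite hrest // (negbTE nipv).
  have [_ _ hd _] := F_shape hL nvpv hnz.
  have hT := Rg_E1 (- M v (pp v)) Sv hd.
  apply: (Rstep hT); apply: cont.
  - apply: Bi_step (Rg_Lg hT) hB _ => z hz hf; apply: fixedcol_E => //.
    by apply: contraNneq nPpv => ->.
  - by apply: fixedcol_E.
  move=> i; rewrite mulE hdiag mulr1.
  case: (i =P v) => [->|/eqP niv]; first by rewrite (negbTE nvpv) /=; ring.
  case: (i =P pp v) => [->|/eqP nipv]; first by rewrite hdiag /=; ring.
  by rewrite hrest // /=; ring.
have [Sx Spv d1 d2] := F_shape hL nxpv hx.
have nPx : ~~ PF0 x.
  apply/negP => hPx; move: hx; rewrite (F_row hL (hB.2 _ _)) ?eqxx //.
    by rewrite PF0_pp.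
  by rewrite eq_sym.
have nPpx : ~~ PF0 (pp x) by rewrite PF0_pp.
have npxpv : pp x != pp v by rewrite (inj_eq pp_inj).
set c := - M x (pp v).
have hT := Rg_T2 c Sx Spv nxpv npxpv d1 d2.
have col : forall i, (T2 x (pp v) c *m M) i (pp v) =
    M i (pp v) + (- (c * th x * th (pp v))) * (i == v)%:R * M (pp x) (pp v)
    + c * (i == x)%:R.
  move=> i; rewrite /T2 -mulmxA !mulE ppK hdiag (negbTE npvv) mulr0 mul0r addr0 mulr1.
  done.
apply: (Rstep hT); apply: (IH (T2 x (pp v) c *m M)).
- set A := [set y | (y != v) && (y != pp v) && (M y (pp v) != 0)].
  have hxA : x \in A by rewrite inE nxv nxpv hx.
  have hsub : [set y | (y != v) && (y != pp v) && ((T2 x (pp v) c *m M) y (pp v) != 0)]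
      \subset A :\ x.
    apply/subsetP => y; rewrite !inE col => /andP[/andP[nyv nypv] hy].
    rewrite (negbTE nyv) mulr0 mul0r addr0 in hy.
    case: (y =P x) => [eyx|/eqP nyx].
      by subst y; rewrite eqxx mulr1 /c addrN eqxx in hy.
    by rewrite (negbTE nyx) mulr0 addr0 in hy; rewrite nyv nypv hy.
  move: hm; rewrite /nu -/A (cardsD1 x A) hxA add1n ltnS => hm.
  exact: leq_ltn_trans (subset_leq_card hsub) hm.
- apply: Bi_step (Rg_Lg hT) hB _ => z hz hf; rewrite /T2 -mulmxA.
  apply: fixedcol_E; first apply: fixedcol_E => //.
    by apply: contraNneq nPpx => ->.
  by apply: contraNneq nPpv => ->.
- rewrite /T2 -mulmxA; apply: fixedcol_E; first apply: fixedcol_E => //.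
    by rewrite -eq_pp.
  exact: pp_neq.
Qed.

Lemma reduce :
  (forall M, Bi M -> fixedcol M v -> fixedcol M (pp v) -> Rg M) ->
  forall M, Bi M -> Rg M.
Proof.
move=> cont M hB.
have hI : Inv1 M.
  split=> // x hx.
  case: (x =P v) => [->|/eqP nxv]; first exact: Cv.
  have [Sx _ d1 d2] := F_shape hB.1 nxv hx.
  have Rxv : R x v by rewrite /R d1 d2 orbT.
  have nPx : ~~ PF0 x.
    apply/negP => hPx; move: hx; rewrite (F_row hB.1 (hB.2 _ _)) ?eqxx //.
      by rewrite PF0_pp.
    by rewrite eq_sym.
  by rewrite /C Sx nPx Rxv vmax.
apply: phase1 hI => M1 hI1 hs1.
apply: phase2 hI1 hs1 => M2 hB2 hf2.
exact: phase3 hB2 hf2.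
Qed.

End Reduce.

Definition fcb (M : 'M[int]_n) z := [forall i, M i z == (i == z)%:R].

Lemma fcbP M z : reflect (fixedcol M z) (fcb M z).
Proof.
apply: (iffP forallP) => h i; first exact/eqP.
by apply/eqP.
Qed.

Definition pf (M : 'M[int]_n) z := fcb M z && fcb M (pp z).
Definition NF (M : 'M[int]_n) := [set x | SS x && ~~ pf M x].

Lemma hard M : Lg M -> Rg M.
Proof.
suff H : forall m M, (#|NF M| < m)%N -> Lg M -> Rg M by apply: (H _.+1).
elim=> // m IH {}M hm hL.
case: (set_0Vmem (NF M)) => [h0|[v0 hv0]].
  have -> : M = 1%:M.
    apply/matrixP => i j; rewrite mxE.
    case hs: (SS j); last by rewrite (F_nonS hL (negbT hs)).
    have : j \notin NF M by rewrite h0 inE.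
    by rewrite inE hs /= negbK => /andP[/fcbP h _].
  exact: gen_one.
set P := fun v => #|[set x in NF M | R x v]|.
have [v hv vmin] := arg_minnP P hv0.
have PF0_pp : forall z, pf M (pp z) = pf M z by move=> z; rewrite /pf ppK andbC.
have : v \in NF M by []. rewrite inE => /andP[Sv nPv].
have vmax : forall x, SS x -> ~~ pf M x -> R x v -> R v x.
  move=> x Sx nPx Rxv.
  have hxN : x \in NF M by rewrite inE Sx nPx.
  have hsub : [set y in NF M | R y x] \subset [set y in NF M | R y v].
    apply/subsetP => y; rewrite !inE => /andP[-> Ryx] /=; exact: R_trans Ryx Rxv.
  have heq : [set y in NF M | R y x] = [set y in NF M | R y v].
    apply/eqP; rewrite eqEcard hsub /=; exact: vmin.
  have : v \in [set y in NF M | R y x] by rewrite heq !inE Sv nPv R_refl.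
  by rewrite inE => /andP[_].
apply: (reduce PF0_pp Sv nPv vmax) => [M' [hL' hf'] hfv hfpv|]; last first.
  split=> // z /andP[/fcbP h1 /fcbP h2]; exact: h1.
apply: (IH M') => //.
have hsub : NF M' \subset NF M :\ v.
  apply/subsetP => x; rewrite !inE => /andP[Sx nPx'].
  rewrite Sx /=; apply/andP; split.
    apply: contraNneq nPx' => ->; rewrite /pf; apply/andP; split; exact/fcbP.
  apply: contra nPx' => hPx; rewrite /pf; apply/andP; split; apply/fcbP; apply: hf' => //.
  by rewrite PF0_pp.
move: hm; rewrite (cardsD1 v (NF M)) inE Sv nPv add1n ltnS => hm.
exact: leq_ltn_trans (subset_leq_card hsub) hm.
Qed.

End Main.

Unset Implicit Arguments.
Theorem theorem4p4 (g : nat) (adj : rel 'I_(2 * g))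
    (adj_irr : forall x, ~~ adj x x) (adj_sym : symmetric adj)
    (star : letter (2 * g) -> letter (2 * g)) (star_bij : bijective star)
    (star_inv : forall u, star (star u) = linv u)
    (a : 'I_g -> letter (2 * g))
    (a_cover : forall x : 'I_(2 * g),
        exists i : 'I_g, bar (a i) = x \/ bar (star (a i)) = x)
    (Q_neq0 : Qform adj a star != 0) :
  forall M : 'M[int]_(2 * g),
    (in_gen (G_gens adj (Qform adj a star)) M
       /\ act2 M (Qform adj a star) = Qform adj a star)
    <-> in_gen (fun N => std_transvection adj star (Qform adj a star) N
                         \/ Q_inversion star (Qform adj a star) N) M.
Proof.
move=> M; split.
  exact: (hard adj_sym star_bij star_inv a_cover).
exact: (Rg_Lg adj_sym star_bij star_inv a_cover).
Qed.
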